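(* Let $f(x)=\sum_{n\ge 1} f_n \frac{x^n}{n!}$ be a formal power series over a field of characteristic zero with $f_1=1$, so that $f'(x)=1+\sum_{n\ge1}f_{n+1}\frac{x^n}{n!}$ and $f$ has a compositional inverse $\bar f(x)$ (i.e. $f(\bar f(x))=\bar f(f(x))=x$). Then the production matrix of the exponential Riordan array $[f'(x), f(x)]$ equals $U\cdot\left[\frac{1}{\bar f'(x)}, x\right]$, where $U=(u_{n,k})_{n,k\ge 0}$ is the shift matrix with $u_{n,k}=1$ if $k=n+1$ and $u_{n,k}=0$ otherwise. Equivalently, if $r_{n,k}=\frac{n!}{k!}[x^n]\frac{x^k}{\bar f'(x)}$ denotes the $(n,k)$-entry of $\left[\frac{1}{\bar f'(x)}, x\right]$, then the $(n,k)$-entry of the production matrix of $[f'(x),f(x)]$ is $r_{n+1,k}$ for all $n,k\ge 0$ (i.e. the production matrix is $\left[\frac{1}{\bar f'(x)}, x\right]$ with its first row removed).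
   Context: For power series $g(x)=1+\sum_{n\ge1} g_n\frac{x^n}{n!}$ and $f(x)=x+\sum_{n\ge 2} f_n\frac{x^n}{n!}$, the exponential Riordan array $[g(x),f(x)]$ is the infinite lower-triangular matrix $(t_{n,k})_{n,k\ge0}$ with $t_{n,k}=\frac{n!}{k!}[x^n]\,g(x)f(x)^k$, where $[x^n]$ extracts the coefficient of $x^n$; its bivariate generating function is $g(x)e^{yf(x)}=\sum_{n,k} t_{n,k}\frac{x^n}{n!}y^k$. The production matrix of $[g(x),f(x)]$ is the infinite matrix $(p_{n,k})_{n,k\ge0}$ defined by $\sum_{n,k\ge0} p_{n,k}\frac{x^n}{n!}y^k = e^{xy}\bigl(Z(x)+yA(x)\bigr)$ (exponential in $x$, ordinary in $y$), where $A(x)=f'(\bar f(x))$ and $Z(x)=\frac{g'(\bar f(x))}{g(\bar f(x))}$, with $\bar f$ the compositional inverse of $f$. *)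

(* Defs.v *)
(* Formal power series over a field R, represented by their
   ORDINARY coefficient sequences: a : nat -> R stands for sum_n a n x^n.
   (The exponential coefficient f_n of the paper is n! * a n.) *)
From mathcomp Require Import all_boot all_order all_algebra.
Set Implicit Arguments. Unset Strict Implicit. Unset Printing Implicit Defensive.
Import Order.TTheory GRing.Theory Num.Theory.
Local Open Scope ring_scope.

Definition fps (R : fieldType) := nat -> R.

Section FPS.
Variable R : fieldType.

Definition fps1 : fps R := fun n => (n == 0)%:R.
Definition fpsX : fps R := fun n => (n == 1)%:R.

Definition fps_mul (a b : fps R) : fps R :=
  fun n => \sum_(i < n.+1) a i * b (n - i)%N.

Fixpoint fps_pow (a : fps R) (k : nat) : fps R :=
  if k is k'.+1 then fps_mul a (fps_pow a k') else fps1.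

(* composition a(b(x)); meaningful when b 0 = 0 *)
Definition fps_comp (a b : fps R) : fps R :=
  fun n => \sum_(k < n.+1) a k * fps_pow b k n.

Definition fps_deriv (a : fps R) : fps R := fun n => a n.+1 *+ n.+1.

Definition riordan (g f : fps R) (n k : nat) : R :=
  n`!%:R / k`!%:R * fps_mul g (fps_pow f k) n.

(* Bivariate series, ordinary coefficients: c i j is the coefficient of x^i y^j. *)
Definition bfps := nat -> nat -> R.
Definition bfps_mul (a b : bfps) : bfps :=
  fun n k => \sum_(i < n.+1) \sum_(j < k.+1) a i j * b (n - i)%N (k - j)%N.

(* e^{xy} *)
Definition bexpxy : bfps := fun i j => if i == j then (i`!%:R)^-1 else 0.
(* Z(x) + y A(x) *)
Definition bZA (Z A : fps R) : bfps :=
  fun i j => if j == 0%N then Z i else if j == 1%N then A i else 0.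

(* Production matrix entry p_{n,k}, defined by
   sum_{n,k} p_{n,k} x^n/n! y^k = e^{xy} (Z(x) + y A(x)). *)
Definition production_entry (Z A : fps R) (n k : nat) : R :=
  n`!%:R * bfps_mul bexpxy (bZA Z A) n k.

End FPS.

(* Main.v *)
Require Import Defs.
From mathcomp Require Import all_boot all_order all_algebra zify ring.
From Stdlib Require Import FunctionalExtensionality.
Import GRing.Theory.
Local Open Scope ring_scope.

Section Aux.
Variable R : fieldType.
Implicit Types (a b c : fps R) (p q : {poly R}).

Definition tr (N : nat) a : {poly R} := \poly_(i < N) a i.

Lemma trE (N : nat) a (i : nat) : (i < N)%N -> (tr N a)`_i = a i.
Proof. by move=> H; rewrite coef_poly H. Qed.

Lemma mulE' a b p q n : (forall i, (i <= n)%N -> p`_i = a i) ->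
  (forall i, (i <= n)%N -> q`_i = b i) -> fps_mul a b n = (p * q)`_n.
Proof.
move=> Hp Hq; rewrite coefM /fps_mul; apply: eq_bigr => i _.
by rewrite Hp -1?ltnS // Hq // leq_subr.
Qed.

Lemma powE' b p k n : (forall i, (i <= n)%N -> p`_i = b i) ->
  fps_pow b k n = (p ^+ k)`_n.
Proof.
move=> Hp; elim: k n Hp => [|k IH] n Hp /=; first by rewrite expr0 coef1.
rewrite exprS; apply: mulE' => // i Hi; rewrite (IH i) // => j Hj.
by apply: Hp; apply: leq_trans Hj Hi.
Qed.

Lemma pow_val b k n : b 0%N = 0 -> (n < k)%N -> fps_pow b k n = 0.
Proof.
move=> b0; elim: k n => [|k IH] n //= Hn; rewrite /fps_mul big1 // => i _.
case: i => [[|i'] Hi] /=; first by rewrite b0 mul0r.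
rewrite IH ?mulr0 //; lia.
Qed.

Lemma widen0 (F : nat -> R) m M : (m <= M)%N ->
  (forall i, (m <= i)%N -> (i < M)%N -> F i = 0) ->
  \sum_(i < M) F i = \sum_(i < m) F i.
Proof.
move=> le H; rewrite (big_ord_widen M F le) [RHS]big_mkcond; apply: eq_bigr => i _.
case: ifP => // /negbT; rewrite -leqNgt => h; by rewrite H.
Qed.

Lemma sum_trunc (F : nat -> R) m n : (forall i, (n < i)%N -> F i = 0) ->
  (forall i, (m <= i)%N -> F i = 0) ->
  \sum_(i < m) F i = \sum_(i < n.+1) F i.
Proof.
move=> H1 H2; rewrite -(@widen0 F m (maxn m n.+1) (leq_maxl _ _)); last first.
  by move=> i Hi _; apply: H2.
rewrite -(@widen0 F n.+1 (maxn m n.+1) (leq_maxr _ _)) //.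
by move=> i Hi _; apply: H1.
Qed.

Lemma compE' a b p q n : b 0%N = 0 -> (forall i, (i <= n)%N -> p`_i = a i) ->
  (forall i, (i <= n)%N -> q`_i = b i) ->
  fps_comp a b n = (p \Po q)`_n.
Proof.
move=> b0 Hp Hq; rewrite comp_polyE coef_sum /fps_comp; symmetry.
under eq_bigr do rewrite coefZ.
rewrite (@sum_trunc (fun i => p`_i * (q ^+ i)`_n) _ n).
- by apply: eq_bigr => i _; rewrite Hp -1?ltnS // (@powE' b q _ _ Hq).
- by move=> i Hi; rewrite -(@powE' b q _ _ Hq) pow_val // mulr0.
- by move=> i Hi; rewrite nth_default // mul0r.
Qed.

Lemma chain a b : b 0%N = 0 -> forall n,
  fps_deriv (fps_comp a b) n = fps_mul (fps_comp (fps_deriv a) b) (fps_deriv b) n.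
Proof.
move=> b0 n; set N := n.+2.
rewrite /fps_deriv (@compE' a b (tr N a) (tr N b)) //; last 2 first.
- by move=> i Hi; rewrite trE // ltnS.
- by move=> i Hi; rewrite trE // ltnS.
rewrite -coef_deriv deriv_comp.
symmetry; apply: mulE' => i Hi.
- symmetry; apply: compE' => // j Hj.
  + by rewrite coef_deriv trE // ltnS ltnS (leq_trans Hj Hi).
  + by rewrite trE // ltnS leqW // (leq_trans Hj Hi).
- by rewrite coef_deriv trE // ltnS ltnS.
Qed.

Lemma mulC a b n : fps_mul a b n = fps_mul b a n.
Proof.
rewrite (@mulE' a b (tr n.+1 a) (tr n.+1 b)); last 2 first.
- by move=> i Hi; rewrite trE.
- by move=> i Hi; rewrite trE.
rewrite mulrC; by symmetry; apply: mulE' => i Hi; rewrite trE.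
Qed.

Lemma mulA a b c n : fps_mul a (fps_mul b c) n = fps_mul (fps_mul a b) c n.
Proof.
have E : forall d i, (i <= n)%N -> (tr n.+1 d)`_i = d i by move=> d i Hi; rewrite trE.
rewrite (@mulE' a (fps_mul b c) (tr n.+1 a) (tr n.+1 b * tr n.+1 c)); last 2 first.
- by move=> i Hi; apply: E.
- by move=> i Hi; symmetry; apply: mulE' => j Hj; apply: E; apply: leq_trans Hj Hi.
rewrite mulrA; symmetry; apply: mulE' => i Hi.
- by symmetry; apply: mulE' => j Hj; apply: E; apply: leq_trans Hj Hi.
- exact: E.
Qed.

Lemma mul1 a n : fps_mul a (fps1 R) n = a n.
Proof.
rewrite (@mulE' a (fps1 R) (tr n.+1 a) 1); last 2 first.
- by move=> i Hi; rewrite trE.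
- by move=> i _; rewrite coef1.
by rewrite mulr1 trE.
Qed.

Lemma powX k m : fps_pow (fpsX R) k m = (m == k)%:R.
Proof.
rewrite (@powE' (fpsX R) 'X) ?coefXn // => i _; by rewrite coefX.
Qed.

Lemma mulXk h k m : fps_mul h (fps_pow (fpsX R) k) m = if (k <= m)%N then h (m - k)%N else 0.
Proof.
rewrite (@mulE' h _ (tr m.+1 h) 'X^k) ?coefMXn.
- by rewrite ltnNge; case: leqP => H /=; rewrite ?trE // ltnS leq_subr.
- by move=> i Hi; rewrite trE.
- by move=> i _; rewrite powX coefXn.
Qed.


Lemma inner_eq (Z A : fps R) n k i :
  \sum_(j < k.+1) bexpxy R i j * bZA Z A (n - i)%N (k - j)%N =
  if (i < k.+1)%N then (i`!%:R)^-1 * bZA Z A (n - i)%N (k - i)%N else 0.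
Proof.
transitivity (\sum_(j < k.+1 | j == i :> nat) (i`!%:R)^-1 * bZA Z A (n - i)%N (k - j)%N); last first.
  by rewrite (big_ord1_eq _ (fun j : nat => (i`!%:R)^-1 * bZA Z A (n - i)%N (k - j)%N)).
rewrite [RHS]big_mkcond; apply: eq_bigr => j _ /=.
rewrite /bexpxy; case: eqP => [->|ne]; first by rewrite eqxx.
by case: eqP => [E|]; [case: ne | rewrite mul0r].
Qed.

Lemma pe_eval (Z A : fps R) n k : production_entry Z A n k =
  n`!%:R * ((if (k <= n)%N then Z (n - k)%N / k`!%:R else 0) +
            (if (0 < k)%N && (k <= n.+1)%N then A (n.+1 - k)%N / (k.-1)`!%:R else 0)).
Proof.
rewrite /production_entry /bfps_mul; congr (_ * _).
under eq_bigr do rewrite inner_eq.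
transitivity (\sum_(i < n.+1) ((if i == k :> nat then Z (n - k)%N / k`!%:R else 0) +
   (if i.+1 == k then A (n - i)%N / i`!%:R else 0))).
  apply: eq_bigr => [[i Hi]] _ /=; rewrite /bZA.
  case: (ltngtP i k) => H.
  - rewrite ltnS ltnW //.
    have -> : (k - i == 0)%N = false by lia.
    case E: (i.+1 == k).
      have -> : (k - i == 1)%N = true by lia.
      by rewrite add0r mulrC.
    have -> : (k - i == 1)%N = false by lia.
    by rewrite mulr0 addr0.
  - have -> : (i < k.+1)%N = false by lia.
    have -> : (i.+1 == k) = false by lia.
    by rewrite addr0.
  - subst i; rewrite ltnSn subnn eqxx.
    have -> : (k.+1 == k) = false by lia.
    by rewrite addr0 mulrC.
rewrite big_split /=; congr (_ + _).
  by rewrite -big_mkcond (big_ord1_eq _ (fun=> Z (n - k)%N / k`!%:R)) ltnS.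
case: k => [|k]; first by rewrite big1.
rewrite -big_mkcond /=.
under eq_bigl do rewrite eqSS.
by rewrite (big_ord1_eq _ (fun i => A (n - i)%N / i`!%:R)) ltnS subSS.
Qed.

End Aux.

Lemma nzR (R : fieldType) (char0 : [pchar R] =i pred0) m : (0 < m)%N -> (m%:R : R) != 0.
Proof. by move=> H; rewrite (proj1 (pcharf0P R) char0); rewrite -lt0n. Qed.

Theorem mainTheorem1 (R : fieldType) (char0 : [pchar R] =i pred0)
    (f fbar Z A h : fps R) :
  f 0%N = 0 -> f 1%N = 1 ->
  fbar 0%N = 0 ->
  fps_comp f fbar = fpsX R -> fps_comp fbar f = fpsX R ->
  A = fps_comp (fps_deriv f) fbar ->
  fps_mul Z (fps_comp (fps_deriv f) fbar) = fps_comp (fps_deriv (fps_deriv f)) fbar ->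
  fps_mul h (fps_deriv fbar) = fps1 R ->
  forall n k : nat, production_entry Z A n k = riordan h (fpsX R) n.+1 k.
Proof.
move=> f0 f1 fb0 Hf _ HA HZ Hh.
have fe : forall a b : fps R, (forall i, a i = b i) -> a = b.
  by move=> a b H; apply: functional_extensionality.
have mC : forall a b : fps R, fps_mul a b = fps_mul b a by move=> a b; apply: fe => i; apply: mulC.
have mA : forall a b c : fps R, fps_mul a (fps_mul b c) = fps_mul (fps_mul a b) c.
  by move=> a b c; apply: fe => i; apply: mulA.
have m1 : forall a : fps R, fps_mul a (fps1 R) = a by move=> a; apply: fe => i; apply: mul1.
have A1 : fps_mul A (fps_deriv fbar) = fps1 R.
  apply: fe => i; rewrite HA -chain // Hf /fps_deriv /fpsX /fps1.
  by case: i => [|i]; rewrite /= ?mulr1n ?mul0rn.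
have Ah : A = h.
  by rewrite -[LHS]m1 -Hh mA (mC A h) -mA A1 m1.
have Zh : Z = fps_deriv h.
  apply: fe => i; rewrite -Ah HA chain // -HZ -HA -mA A1 m1 //.
subst A Z.
move=> n k; rewrite pe_eval /riordan mulXk Ah.
have nz := @nzR R char0.
have fnz : forall m, (m`!%:R : R) != 0 by move=> m; apply: nz; apply: fact_gt0.
case: (leqP k n) => Hk.
  have [d ->] : exists d, n = (k + d)%N by exists (n - k)%N; lia.
  have -> : (k <= (k + d).+1)%N = true by lia.
  have -> : ((k + d).+1 - k = d.+1)%N by lia.
  have -> : ((k + d) - k = d)%N by lia.
  rewrite /fps_deriv -mulr_natr.
  case: k {Hk} => [|k].
    rewrite ltnn andFb addr0 add0n (factS d) fact0 natrM.
    field.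
    by rewrite oner_neq0.
  rewrite ltn0Sn andTb.
  change ((k.+1).-1) with k.
  rewrite (factS (k.+1 + d)) (factS k) !natrM.
  have a1 := fnz k; have a2 := fnz (k.+1 + d)%N; have a3 := nz k.+1 isT.
  field.
  have -> : 1 + k%:R = k.+1%:R :> R by rewrite -natr1 addrC.
  by rewrite a1 a3.
case: (leqP k n.+1) => Hk2.
  have -> : k = n.+1 by lia.
  rewrite ltn0Sn subnn add0r.
  change ((n.+1).-1) with n.
  have a1 := fnz n; have a2 := fnz n.+1.
  field.
  by rewrite a1 a2.
by rewrite andbF addr0 !mulr0.
Qed.
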